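(* Let $\tilde{\mathcal{A}}=\tilde{\mathcal{A}}(R,\boldsymbol{\sigma},\boldsymbol{t})$ be a twisted generalized Weyl construction with $t_1,\dots,t_n$ regular in $R$ and satisfying the consistency equations. Then the following subsets of $\tilde{\mathcal{A}}$ coincide: (i) the sum $\mathcal{I}$ of all graded ideals $I$ of $\tilde{\mathcal{A}}$ with $I\cap R=\{0\}$; (ii) the set of $R$-torsion elements $T_R(\tilde{\mathcal{A}})=\{a\in\tilde{\mathcal{A}}\mid\exists r\in R_{\mathrm{reg}}: ra=0\}$. Moreover $T_R(\tilde{\mathcal{A}})=\{a\in\tilde{\mathcal{A}}\mid\exists r\in R_{\mathrm{reg}}: ar=0\}$.
   Context: Let $\Bbbk$ be a field, $R$ a unital associative $\Bbbk$-algebra, $n\ge1$, $\sigma_1^{1/2},\dots,\sigma_n^{1/2}$ pairwise commuting $\Bbbk$-algebra automorphisms of $R$ (with $\sigma_i=(\sigma_i^{1/2})^2$), and $t_1,\dots,t_n$ central elements of $R$. The TGWC $\tilde{\mathcal{A}}(R,\boldsymbol{\sigma},\boldsymbol{t})$ is the algebra obtained from $R$ by adjoining generators $X_1^\pm,\dots,X_n^\pm$ subject to $X_i^\pm r=\sigma_i^{\pm1}(r)X_i^\pm$ ($r\in R$), $X_i^\pm X_i^\mp=\sigma_i^{\pm1/2}(t_i)$, and $[X_i^\pm,X_j^\mp]=0$ for $i\ne j$. It is $\mathbb{Z}^n$-graded with $\deg r=0$, $\deg X_i^\pm=\pm\mathbf{e}_i$. The consistency equations are: $\sigma_j^{1/2}(t_i)\sigma_i^{1/2}(t_j)=\sigma_j^{-1/2}(t_i)\sigma_i^{-1/2}(t_j)$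 for $i\ne j$, and $\sigma_i^{1/2}\sigma_j^{1/2}(t_k)\,\sigma_i^{-1/2}\sigma_j^{-1/2}(t_k)=\sigma_i^{1/2}\sigma_j^{-1/2}(t_k)\,\sigma_i^{-1/2}\sigma_j^{1/2}(t_k)$ for pairwise distinct $i,j,k$. Under these assumptions $R$ embeds into $\tilde{\mathcal{A}}$ as its degree-zero component, and we identify $R$ with it. $R_{\mathrm{reg}}$ denotes the set of non-zero-divisors of $R$. *)

(* Defs.v *)
From HB Require Import structures.
From mathcomp Require Import all_boot all_order all_algebra.
Set Implicit Arguments. Unset Strict Implicit. Unset Printing Implicit Defensive.
Import Order.TTheory GRing.Theory Num.Theory.
Local Open Scope ring_scope.

Definition unitvec (n : nat) (i : 'I_n) : 'rV[int]_n := delta_mx 0 i.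

Definition regular (R : pzRingType) (r : R) : Prop := GRing.lreg r /\ GRing.rreg r.

(* Defining relations of the TGWC for the data (phi : R -> B, Xp, Xm) in a ring B,
   where s i = sigma_i^{1/2}, si i = sigma_i^{-1/2}, so sigma_i^{+-1} = (s i)^2, (si i)^2. *)
Definition tgwc_relations (R : pzRingType) (n : nat)
    (s si : 'I_n -> R -> R) (t : 'I_n -> R)
    (B : pzRingType) (phi : R -> B) (Xp Xm : 'I_n -> B) : Prop :=
  (forall i r, Xp i * phi r = phi (s i (s i r)) * Xp i) /\
  (forall i r, Xm i * phi r = phi (si i (si i r)) * Xm i) /\
  (forall i, Xp i * Xm i = phi (s i (t i))) /\
  (forall i, Xm i * Xp i = phi (si i (t i))) /\
  (forall i j, i != j -> Xp i * Xm j = Xm j * Xp i) /\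
  (forall i j, i != j -> Xm i * Xp j = Xp j * Xm i).

Definition tgwc_universal (R : pzRingType) (n : nat)
    (s si : 'I_n -> R -> R) (t : 'I_n -> R)
    (A : pzRingType) (iota : {rmorphism R -> A}) (Xp Xm : 'I_n -> A) : Prop :=
  tgwc_relations s si t iota Xp Xm /\
  forall (B : pzRingType) (phi : {rmorphism R -> B}) (Yp Ym : 'I_n -> B),
    tgwc_relations s si t phi Yp Ym ->
    exists psi : {rmorphism A -> B},
      [/\ (forall r, psi (iota r) = phi r), (forall i, psi (Xp i) = Yp i),
          (forall i, psi (Xm i) = Ym i) &
          forall psi' : {rmorphism A -> B},
            (forall r, psi' (iota r) = phi r) -> (forall i, psi' (Xp i) = Yp i) ->
            (forall i, psi' (Xm i) = Ym i) -> forall a, psi' a = psi a].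

Definition is_grading (A : pzRingType) (n : nat) (D : 'rV[int]_n -> A -> Prop) : Prop :=
  [/\ (forall g, D g 0 /\ forall x y, D g x -> D g y -> D g (x - y)),
      (forall g h x y, D g x -> D h y -> D (g + h) (x * y)),
      (forall a, exists (gs : seq 'rV[int]_n) (f : 'rV[int]_n -> A),
          [/\ uniq gs, (forall g, D g (f g)) & a = \sum_(g <- gs) f g]) &
      (forall (gs : seq 'rV[int]_n) (f : 'rV[int]_n -> A),
          uniq gs -> (forall g, D g (f g)) -> \sum_(g <- gs) f g = 0 ->
          forall g, g \in gs -> f g = 0)].

Definition is_ideal (A : pzRingType) (I : A -> Prop) : Prop :=
  [/\ I 0, (forall x y, I x -> I y -> I (x - y)) &
      forall a x, I x -> I (a * x) /\ I (x * a)].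

Definition is_graded_ideal (A : pzRingType) (n : nat) (D : 'rV[int]_n -> A -> Prop)
    (I : A -> Prop) : Prop :=
  is_ideal I /\
  forall a, I a -> exists (gs : seq 'rV[int]_n) (f : 'rV[int]_n -> A),
     [/\ uniq gs, (forall g, D g (f g) /\ I (f g)) & a = \sum_(g <- gs) f g].

Definition in_sum_of_graded_ideals_meeting_R_trivially
    (R A : pzRingType) (n : nat) (D : 'rV[int]_n -> A -> Prop)
    (iota : R -> A) (a : A) : Prop :=
  exists (m : nat) (Is : 'I_m -> A -> Prop) (xs : 'I_m -> A),
    [/\ (forall j, is_graded_ideal D (Is j)),
        (forall j r, Is j (iota r) -> iota r = 0),
        (forall j, Is j (xs j)) &
        a = \sum_(j < m) xs j].

(* Main.v *)
Require Import Defs.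
From HB Require Import structures.
From mathcomp Require Import all_boot all_order all_algebra.
From mathcomp Require Import boolp zify ring.
Import GRing.Theory.
Unset Printing Implicit Defensive.
Local Open Scope ring_scope.
Local Open Scope quotient_scope.

Ltac vec := apply/rowP => ?; rewrite !mxE; first [lia | ring].

Record zpred (M : zmodType) := ZPred {
  zp :> M -> Prop;
  zp0 : zp 0;
  zpB : forall x y, zp x -> zp y -> zp (x - y) }.

Section EndoRing.
Variables (M : zmodType) (P : zpred M).

Record endo := Endo {
  ef :> M -> M;
  ef_add : forall x y, ef (x - y) = ef x - ef y;
  ef_P : forall x, P x -> P (ef x) }.

HB.instance Definition _ := gen_eqMixin endo.
HB.instance Definition _ := gen_choiceMixin endo.

Lemma endo_ext (f g : endo) : (forall x, f x = g x) -> f = g.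
Proof.
case: f g => f fa fp [g ga gp] /= H.
have E : f = g by apply: funext.
subst g; congr Endo; apply: Prop_irrelevance.
Qed.

Let P0 : P 0 := @zp0 M P.
Let PB : forall x y, P x -> P y -> P (x - y) := @zpB M P.

Lemma PN x : P x -> P (- x).
Proof. by move=> h; rewrite -sub0r; apply: PB => //; apply: P0. Qed.
Lemma PD x y : P x -> P y -> P (x + y).
Proof. by move=> hx hy; rewrite -[y]opprK; apply: PB => //; apply: PN. Qed.

Lemma ef0 (f : endo) : f 0 = 0.
Proof. by have := ef_add f 0 0; rewrite !subrr. Qed.
Lemma efN (f : endo) x : f (- x) = - f x.
Proof. by rewrite -sub0r ef_add ef0 sub0r. Qed.
Lemma efD (f : endo) x y : f (x + y) = f x + f y.
Proof. by have := ef_add f x (- y); rewrite opprK => ->; rewrite efN opprK. Qed.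

Definition e0 : endo.
Proof. by refine (@Endo (fun _ => 0) _ _) => [x y|x _]; rewrite ?subr0. Defined.
Definition e1 : endo.
Proof. by refine (@Endo id _ _). Defined.
Definition eopp (f : endo) : endo.
Proof. refine (@Endo (fun x => - f x) _ _) => [x y|x hx].
  by rewrite ef_add opprB addrC opprK.
by apply: PN; apply: ef_P. Defined.
Definition eadd (f g : endo) : endo.
Proof. refine (@Endo (fun x => f x + g x) _ _) => [x y|x hx].
  by rewrite !ef_add opprD addrACA.
by apply: PD; apply: ef_P. Defined.
Definition emul (f g : endo) : endo.
Proof. refine (@Endo (fun x => f (g x)) _ _) => [x y|x hx].
  by rewrite !ef_add.
by do 2 apply: ef_P. Defined.

Lemma eaddA : associative eadd.
Proof. by move=> f g h; apply: endo_ext => x /=; rewrite addrA. Qed.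
Lemma eaddC : commutative eadd.
Proof. by move=> f g; apply: endo_ext => x /=; rewrite addrC. Qed.
Lemma eadd0 : left_id e0 eadd.
Proof. by move=> f; apply: endo_ext => x /=; rewrite add0r. Qed.
Lemma eaddN : left_inverse e0 eopp eadd.
Proof. by move=> f; apply: endo_ext => x /=; rewrite addNr. Qed.
Lemma emulA : associative emul.
Proof. by move=> f g h; apply: endo_ext. Qed.
Lemma emul1 : left_id e1 emul.
Proof. by move=> f; apply: endo_ext. Qed.
Lemma emulr1 : right_id e1 emul.
Proof. by move=> f; apply: endo_ext. Qed.
Lemma emulDl : left_distributive emul eadd.
Proof. by move=> f g h; apply: endo_ext. Qed.
Lemma emulDr : right_distributive emul eadd.
Proof. by move=> f g h; apply: endo_ext => x /=; rewrite efD. Qed.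

HB.instance Definition _ := GRing.isPzRing.Build endo eaddA eaddC eadd0 eaddN
  emulA emul1 emulr1 emulDl emulDr.

Lemma endo_mulE (f g : endo) x : (f * g) x = f (g x). Proof. by []. Qed.
Lemma endo_addE (f g : endo) x : (f + g) x = f x + g x. Proof. by []. Qed.
Lemma endo_oneE x : (1 : endo) x = x. Proof. by []. Qed.
Lemma endo_zeroE x : (0 : endo) x = 0. Proof. by []. Qed.
Lemma endo_oppE (f : endo) x : (- f) x = - f x. Proof. by []. Qed.
End EndoRing.

Section CRdefs.
Variable R : pzRingType.
Definition CR (c : R) := (forall x, c * x = x * c) /\ (forall x, c * x = 0 -> x = 0).

Lemma CR_mul a b : CR a -> CR b -> CR (a * b).
Proof.
move=> [ca ra] [cb rb]; split => [x|x].
  by rewrite -mulrA cb mulrA ca mulrA.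
by rewrite -mulrA => /ra /rb.
Qed.
Lemma CR_rreg c x : CR c -> x * c = 0 -> x = 0.
Proof. by move=> [cc rc]; rewrite -cc => /rc. Qed.
Lemma CR1 : CR 1.
Proof. by split=> x; rewrite ?mul1r ?mulr1. Qed.

Lemma CRC c x : CR c -> c * x = x * c. Proof. by case=> h _; apply: h. Qed.
Lemma CR_inj c x y : CR c -> c * x = c * y -> x = y.
Proof. by move=> [_ h] e; apply/eqP; rewrite -subr_eq0; apply/eqP/h; rewrite mulrBr e subrr. Qed.

Lemma eq4 (a b c d a' b' c' d' : R) : a = a' -> b = b' -> c = c' -> d = d' ->
  a * b = c * d -> a' * b' = c' * d'.
Proof. by move=> -> -> -> ->. Qed.

Lemma aux1 (A B C Dd E F : R) : CR A -> CR B -> CR C -> CR Dd -> CR E -> CR F ->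
  A * C = B * Dd -> F * C = Dd * E -> A * E = B * F.
Proof.
move=> hA hB hC hD hE hF Q H; apply: (@CR_inj C _ _ hC).
rewrite mulrA [C * A](CRC _ _ hC) Q -mulrA -H [F * C](CRC _ _ hF) mulrA.
by rewrite [B * C](CRC _ _ hB) -mulrA.
Qed.
Lemma aux2 (A B C Dd E F : R) : CR A -> CR B -> CR C -> CR Dd -> CR E -> CR F ->
  A * E = B * F -> F * C = Dd * E -> A * C = B * Dd.
Proof.
move=> hA hB hC hD hE hF Q H; apply: (@CR_inj F _ _ hF).
rewrite mulrA [F * A](CRC _ _ hF) -mulrA H [Dd * E](CRC _ _ hD) mulrA Q.
by rewrite [RHS](CRC _ _ hF) -!mulrA [F * Dd](CRC _ _ hF).
Qed.

End CRdefs.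
Arguments CR {R}.
Arguments CR_mul {R}.
Arguments CR_rreg {R}.
Arguments CR1 {R}.
Arguments CRC {R}.
Arguments CR_inj {R}.
Arguments eq4 {R}.
Arguments aux1 {R}.
Arguments aux2 {R}.

Section Loc.
Variables (R : pzRingType) (I : choiceType) (atm : I -> R).
Hypothesis hat : forall p, CR (atm p).

Definition den (d : seq I) : R := \prod_(p <- d) atm p.
Lemma CR_den d : CR (den d).
Proof.
rewrite /den; elim: d => [|p d IH]; first by rewrite big_nil; apply: CR1.
by rewrite big_cons; apply: (CR_mul _ _ (hat p) IH).
Qed.
Lemma den_cat d e : den (d ++ e) = den d * den e.
Proof. by rewrite /den big_cat. Qed.
Lemma den_cons p d : den (p :: d) = atm p * den d.
Proof. by rewrite /den big_cons. Qed.
Lemma den_nil : den [::] = 1. Proof. by rewrite /den big_nil. Qed.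

Lemma cC {u x : R} : CR u -> u * x = x * u. Proof. exact: CRC. Qed.
Lemma cCA {u v x : R} : CR u -> u * (v * x) = v * (u * x).
Proof. by move=> hu; rewrite mulrA (cC hu) -mulrA. Qed.
Lemma cAC {x u y : R} : CR u -> x * u * y = x * y * u.
Proof. by move=> hu; rewrite -mulrA (cC hu) mulrA. Qed.

Definition fe (x y : R * seq I) : bool := x.1 * den y.2 == y.1 * den x.2.
Lemma fe_refl : reflexive fe. Proof. by move=> x; rewrite /fe. Qed.
Lemma fe_sym : symmetric fe. Proof. by move=> x y; rewrite /fe eq_sym. Qed.
Lemma fe_trans : transitive fe.
Proof.
move=> y x z; rewrite /fe => /eqP h1 /eqP h2.
have H : x.1 * den z.2 * den y.2 = z.1 * den x.2 * den y.2.
  rewrite -mulrA (cC (CR_den z.2)) mulrA h1 -mulrA (cC (CR_den x.2)) mulrA h2.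
  by rewrite -!mulrA (cC (CR_den y.2)).
rewrite -subr_eq0; apply/eqP; apply: (CR_rreg _ _ (CR_den y.2)).
by rewrite mulrBl H subrr.
Qed.


Canonical fe_equiv := EquivRel fe fe_refl fe_sym fe_trans.
Definition L := {eq_quot fe}.
HB.instance Definition _ : EqQuotient _ fe L := EqQuotient.on L.
HB.instance Definition _ := Choice.on L.

Definition Lpi (a : R) (d : seq I) : L := \pi_L (a, d).

Lemma Lpi_eq a d b e : Lpi a d = Lpi b e <-> a * den e = b * den d.
Proof.
split => [h|h].
  have : (a, d) == (b, e) %[mod L] by rewrite /Lpi in h; rewrite h.
  by rewrite eqmodE => /eqP.
by apply/eqP; rewrite /Lpi eqmodE; apply/eqP.
Qed.

Lemma Lpi_repr (x : L) : x = Lpi (repr x).1 (repr x).2.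
Proof. by rewrite /Lpi -surjective_pairing reprK. Qed.

Lemma repr_Lpi a d : Lpi (repr (Lpi a d)).1 (repr (Lpi a d)).2 = Lpi a d.
Proof. by rewrite -Lpi_repr. Qed.

Lemma repr_Lpi_eq a d : (repr (Lpi a d)).1 * den d = a * den (repr (Lpi a d)).2.
Proof. by apply/Lpi_eq; rewrite repr_Lpi. Qed.

Lemma Lpi_perm a d e : den d = den e -> Lpi a d = Lpi a e.
Proof. by move=> h; apply/Lpi_eq; rewrite h. Qed.

Lemma Lpi_scale a d e : Lpi (a * den e) (d ++ e) = Lpi a d.
Proof. by apply/Lpi_eq; rewrite den_cat -mulrA (cC (CR_den e)). Qed.

Lemma Lpi_scale' a d e c : den e = c -> Lpi (a * c) (d ++ e) = Lpi a d.
Proof. by move<-; apply: Lpi_scale. Qed.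

Definition Lzero : L := Lpi 0 [::].
Definition Ladd (x y : L) : L :=
  Lpi ((repr x).1 * den (repr y).2 + (repr y).1 * den (repr x).2) ((repr x).2 ++ (repr y).2).
Definition Lopp (x : L) : L := Lpi (- (repr x).1) (repr x).2.

Lemma LaddE a d b e : Ladd (Lpi a d) (Lpi b e) = Lpi (a * den e + b * den d) (d ++ e).
Proof.
rewrite /Ladd; have ha := repr_Lpi_eq a d; have hb := repr_Lpi_eq b e.
move: ha hb; case: (repr (Lpi a d)) => a' d'; case: (repr (Lpi b e)) => b' e' /= ha hb.
apply/Lpi_eq; rewrite !den_cat !mulrDl !mulrA.
congr (_ + _).
  rewrite [a' * den e' * den d](cAC (CR_den e')) ha.
  rewrite [a * den e * den d'](cAC (CR_den e)).
  by rewrite [a * den d' * den e * den e'](cAC (CR_den e)).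
rewrite [b' * den d' * den d * den e](cAC (CR_den d)).
rewrite [b' * den d' * den e](cAC (CR_den d')) hb.
rewrite [b * den d * den d'](cAC (CR_den d)).
rewrite [b * den d' * den d * den e'](cAC (CR_den d)).
by rewrite [b * den d' * den e'](cAC (CR_den d')).
Qed.

Lemma LoppE a d : Lopp (Lpi a d) = Lpi (- a) d.
Proof.
rewrite /Lopp; apply/Lpi_eq; rewrite !mulNr; congr (- _); exact: repr_Lpi_eq.
Qed.

Lemma Lind (P : L -> Prop) : (forall a d, P (Lpi a d)) -> forall x, P x.
Proof. by move=> h x; rewrite (Lpi_repr x). Qed.

Lemma LaddA : associative Ladd.
Proof.
elim/Lind => a d; elim/Lind => b e; elim/Lind => c f; rewrite !LaddE catA.
congr Lpi; rewrite !mulrDl !den_cat !mulrA -addrA; congr (_ + (_ + _)).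
  by rewrite [b * den d * den f](cAC (CR_den d)).
by rewrite [c * den d * den e](cAC (CR_den d)).
Qed.

Lemma LaddC : commutative Ladd.
Proof.
elim/Lind => a d; elim/Lind => b e; rewrite !LaddE addrC.
by apply: Lpi_perm; rewrite !den_cat (cC (CR_den d)).
Qed.

Lemma Ladd0 : left_id Lzero Ladd.
Proof. elim/Lind => a d; by rewrite /Lzero LaddE den_nil mul0r add0r mulr1. Qed.

Lemma LaddN : left_inverse Lzero Lopp Ladd.
Proof.
elim/Lind => a d; rewrite LoppE LaddE mulNr addNr /Lzero.
by apply/Lpi_eq; rewrite !mul0r.
Qed.

HB.instance Definition _ := GRing.isZmodule.Build L LaddA LaddC Ladd0 LaddN.

Lemma LpiD a d b e : Lpi a d + Lpi b e = Lpi (a * den e + b * den d) (d ++ e).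
Proof. exact: LaddE. Qed.
Lemma LpiN a d : - Lpi a d = Lpi (- a) d.
Proof. exact: LoppE. Qed.
Lemma Lpi0 d : Lpi 0 d = 0.
Proof. by apply/Lpi_eq; rewrite !mul0r. Qed.
Lemma LpiB a b d : Lpi a d - Lpi b d = Lpi (a - b) d.
Proof.
rewrite LpiN LpiD -(Lpi_scale (a - b) d d); congr Lpi.
by rewrite mulrBl mulNr.
Qed.

Definition act (r : R) (x : L) : L := Lpi (r * (repr x).1) (repr x).2.
Lemma actE r a d : act r (Lpi a d) = Lpi (r * a) d.
Proof. by rewrite /act; apply/Lpi_eq; rewrite -!mulrA repr_Lpi_eq. Qed.

Definition dv (p : I) (x : L) : L := Lpi (repr x).1 (p :: (repr x).2).
Lemma dvE p a d : dv p (Lpi a d) = Lpi a (p :: d).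
Proof.
rewrite /dv; have ha := repr_Lpi_eq a d.
move: ha; case: (repr (Lpi a d)) => a' d' /= ha.
apply/Lpi_eq; rewrite !den_cons !mulrA.
rewrite [a' * atm p * den d](cAC (hat p)) ha.
by rewrite [a * atm p * den d'](cAC (hat p)).
Qed.

Lemma act_add r x y : act r (x + y) = act r x + act r y.
Proof.
by elim/Lind: x => a d; elim/Lind: y => b e; rewrite LpiD !actE LpiD mulrDr !mulrA.
Qed.
Lemma act_sub r x y : act r (x - y) = act r x - act r y.
Proof.
elim/Lind: x => a d; elim/Lind: y => b e.
by rewrite LpiN LpiD !actE LpiN LpiD mulrDr !mulrA !mulrN !mulNr.
Qed.
Lemma act_subl r r' x : act (r - r') x = act r x - act r' x.
Proof. by elim/Lind: x => a d; rewrite !actE LpiB mulrBl. Qed.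
Lemma act_mul r r' x : act r (act r' x) = act (r * r') x.
Proof. by elim/Lind: x => a d; rewrite !actE mulrA. Qed.
Lemma act1 x : act 1 x = x.
Proof. by elim/Lind: x => a d; rewrite actE mul1r. Qed.
Lemma dv_sub p x y : dv p (x - y) = dv p x - dv p y.
Proof.
elim/Lind: x => a d; elim/Lind: y => b e.
rewrite LpiN LpiD !dvE LpiN LpiD.
apply/Lpi_eq; rewrite !den_cons !den_cat !den_cons !mulrDl !mulNr !mulrA.
congr (_ - _).
  rewrite [a * den e * atm p](cAC (CR_den e)).
  by rewrite [a * atm p * den e * den d * atm p](cAC (CR_den d)).
rewrite [b * den d * atm p](cAC (CR_den d)).
by rewrite [b * atm p * den d * den d * atm p](cAC (CR_den d)).
Qed.
Lemma dv_act p r x : dv p (act r x) = act r (dv p x).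
Proof. by elim/Lind: x => a d; rewrite (actE r a d) (dvE p (r * a) d) (dvE p a d) (actE r a (p :: d)). Qed.

Lemma frac4 c1 c2 c3 p1 p2 x : CR c1 -> CR c2 -> CR c3 ->
  c1 * atm p2 = c2 * c3 * atm p1 ->
  act c1 (dv p1 x) = act c2 (dv p2 (act c3 x)).
Proof.
move=> h1 h2 h3 e; elim/Lind: x => a d.
rewrite (dvE p1 a d) (actE c1 a (p1 :: d)) (actE c3 a d) (dvE p2 (c3 * a) d) (actE c2 (c3 * a) (p2 :: d)).
apply/Lpi_eq.
rewrite !den_cons.
have -> : c1 * a * (atm p2 * den d) = a * (c1 * atm p2) * den d.
  by rewrite [c1 * a](cC h1) !mulrA.
rewrite e.
have -> : c2 * (c3 * a) * (atm p1 * den d) = a * (c2 * c3 * atm p1) * den d.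
  by rewrite [c3 * a](cC h3) [c2 * (a * c3)]mulrA [c2 * a](cC h2) !mulrA.
done.
Qed.

Lemma frac2 c1 c2 p x : CR c1 -> CR c2 -> c1 = c2 * atm p ->
  act c1 (dv p x) = act c2 x.
Proof.
move=> h1 h2 e; elim/Lind: x => a d; rewrite (dvE p a d) !actE; apply/Lpi_eq.
rewrite den_cons e -!mulrA; congr (_ * _); exact: cCA (hat p).
Qed.

Lemma frac3 c1 c2 c3 p x : CR c1 -> CR c2 -> CR c3 -> c1 * c3 = c2 * atm p ->
  act c1 (dv p (act c3 x)) = act c2 x.
Proof.
move=> h1 h2 h3 e; elim/Lind: x => a d.
rewrite (actE c3 a d) (dvE p (c3 * a) d) (actE c1 (c3 * a) (p :: d)) (actE c2 a d).
apply/Lpi_eq.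
rewrite den_cons [c1 * (c3 * a)]mulrA e -!mulrA; congr (_ * _); exact: cCA (hat p).
Qed.

Lemma act_faithful r : act r (Lpi 1 [::]) = 0 -> r = 0.
Proof.
by rewrite actE mulr1 -(Lpi0 [::]) => /Lpi_eq; rewrite den_nil !mulr1.
Qed.

End Loc.


Section Main.
Variables (R : pzRingType) (n : nat).
Variables (s si : 'I_n -> {rmorphism R -> R}).
Hypotheses (hs1 : forall i, cancel (s i) (si i)) (hs2 : forall i, cancel (si i) (s i)).
Hypothesis hcomm : forall i j r, s i (s j r) = s j (s i r).

Lemma s_inj i : injective (s i). Proof. exact: can_inj (hs1 i). Qed.
Lemma si_inj i : injective (si i). Proof. exact: can_inj (hs2 i). Qed.

Lemma s_si i j r : s j (si i r) = si i (s j r).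
Proof. apply: (@s_inj i); by rewrite hs2 hcomm hs2. Qed.
Lemma si_si i j r : si j (si i r) = si i (si j r).
Proof. by apply: (@s_inj j); rewrite hs2 s_si hs2. Qed.

Lemma CR_s i c : CR c -> CR (s i c).
Proof.
move=> [cc rc]; split => [x|x].
  by rewrite -{1 2}(hs2 i x) -!rmorphM cc.
rewrite -{1}(hs2 i x) -rmorphM => /(congr1 (si i)); rewrite hs1 rmorph0 => /rc.
by move/(congr1 (s i)); rewrite hs2 rmorph0.
Qed.
Lemma CR_si i c : CR c -> CR (si i c).
Proof.
move=> [cc rc]; split => [x|x].
  by rewrite -{1 2}(hs1 i x) -!rmorphM cc.
rewrite -{1}(hs1 i x) -rmorphM => /(congr1 (s i)); rewrite hs2 rmorph0 => /rc.
by move/(congr1 (si i)); rewrite hs1 rmorph0.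
Qed.

Definition pw (i : 'I_n) (z : int) (r : R) : R :=
  match z with Posz m => iter m (s i) r | Negz m => iter m.+1 (si i) r end.

Definition rmap (f : R -> R) :=
  [/\ forall a b, f (a - b) = f a - f b, forall a b, f (a * b) = f a * f b & f 1 = 1].

Lemma rmap_iter (f : R -> R) m : rmap f -> rmap (iter m f).
Proof.
move=> [fB fM f1]; elim: m => [|m [IB IM I1]]; first by split.
by split => [a b|a b|] /=; rewrite ?IB ?IM ?I1 ?fB ?fM ?f1.
Qed.

Lemma rmap_pw i z : rmap (pw i z).
Proof.
case: z => m /=; apply: rmap_iter; split=> *; rewrite ?rmorphB ?rmorphM ?rmorph1 //.
Qed.

Lemma CR_iter (f : R -> R) m c : (forall c, CR c -> CR (f c)) -> CR c -> CR (iter m f c).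
Proof. by move=> hf hc; elim: m => //= m IH; apply: hf. Qed.

Lemma CR_pw i z c : CR c -> CR (pw i z c).
Proof.
case: z => m hc; [apply: (@CR_iter (s i)) | apply: (@CR_iter (si i))] => // *;
  [exact: CR_s | exact: CR_si].
Qed.

Lemma pw_s i j z r : pw i z (s j r) = s j (pw i z r).
Proof.
have H (f : R -> R) m x : (forall y, f (s j y) = s j (f y)) -> iter m f (s j x) = s j (iter m f x).
  by move=> hf; elim: m => //= m ->; rewrite hf.
case: z => m /=.
  by rewrite (H (s i)) // => y; rewrite hcomm.
rewrite (H (si i)) ?s_si // => y; by rewrite s_si.
Qed.

Lemma pwS i z r : pw i (z + 1) r = s i (pw i z r).
Proof.
case: z => [m|[|m]].
- by have -> : Posz m + 1 = Posz m.+1 by lia.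
- by rewrite /= hs2.
- have -> : Negz m.+1 + 1 = Negz m by lia.
  by rewrite /= hs2.
Qed.
Lemma pwP i z r : pw i (z - 1) r = si i (pw i z r).
Proof. by rewrite -{2}(subrK 1 z) pwS hs1. Qed.

Definition Sl (l : seq 'I_n) (x : 'rV[int]_n) (r : R) :=
  foldr (fun i acc => pw i (x 0 i) acc) r l.
Definition S x r := Sl (enum 'I_n) x r.

Lemma Sl_s l x j r : Sl l x (s j r) = s j (Sl l x r).
Proof. by elim: l => //= i l ->; rewrite pw_s. Qed.
Lemma S_s x j r : S x (s j r) = s j (S x r).
Proof. exact: Sl_s. Qed.

Lemma Sl_eq (l : seq (ordinal n)) (x y : 'rV[int]_n) (r : R) : (forall i, i \in l -> x 0 i = y 0 i) -> Sl l x r = Sl l y r.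
Proof.
elim: l => //= i l IH H; rewrite H ?mem_head // IH // => a al.
by apply: H; rewrite in_cons al orbT.
Qed.

Lemma uv_ne (i j : 'I_n) : i != j -> unitvec j 0 i = 0.
Proof. by move=> ne; rewrite /unitvec mxE /= (negbTE ne). Qed.
Lemma uv_eq (i : 'I_n) : unitvec i 0 i = 1.
Proof. by rewrite /unitvec mxE /= !eqxx. Qed.

Lemma Sl_e (l : seq (ordinal n)) (x : 'rV[int]_n) (j : ordinal n) (r : R) : uniq l -> j \in l -> Sl l (x + unitvec j) r = s j (Sl l x r).
Proof.
elim: l => //= i l IH /andP [il ul]; rewrite in_cons => /orP [/eqP ji|jl].
  subst i; rewrite (@Sl_eq l (x + unitvec j) x).
    by rewrite mxE uv_eq pwS.
  by move=> a al; rewrite mxE uv_ne ?addr0 //; apply: contraNneq il => <-.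
have ij : i != j by apply: contraNneq il => ->.
by rewrite IH // mxE uv_ne // addr0 pw_s.
Qed.

Lemma S_e x j r : S (x + unitvec j) r = s j (S x r).
Proof. by apply: Sl_e; rewrite ?enum_uniq ?mem_enum. Qed.
Lemma S_me x j r : S (x - unitvec j) r = si j (S x r).
Proof. by rewrite -{2}(subrK (unitvec j) x) S_e hs1. Qed.

Lemma Ss x j r : S x (s j r) = S (x + unitvec j) r.
Proof. by rewrite S_s S_e. Qed.
Lemma Ssi x j r : S x (si j r) = S (x - unitvec j) r.
Proof. by apply: (@s_inj j); rewrite -S_s hs2 -S_e subrK. Qed.

Lemma S0 r : S 0 r = r.
Proof. rewrite /S; elim: (enum 'I_n) => //= i l ->; by rewrite mxE. Qed.

Lemma rmap_S x : rmap (S x).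
Proof.
rewrite /S; elim: (enum 'I_n) => [|i l [IB IM I1]] /=; first by split.
have [pB pM p1] := rmap_pw i (x 0 i).
by split => [a b|a b|]; rewrite ?IB ?IM ?I1 ?pB ?pM ?p1.
Qed.
Lemma SB x a b : S x (a - b) = S x a - S x b. Proof. by case: (rmap_S x). Qed.
Lemma SM x a b : S x (a * b) = S x a * S x b. Proof. by case: (rmap_S x). Qed.
Lemma S1 x : S x 1 = 1. Proof. by case: (rmap_S x). Qed.
Lemma CR_S x c : CR c -> CR (S x c).
Proof. rewrite /S; elim: (enum 'I_n) => //= i l IH hc; exact/CR_pw/IH. Qed.
Lemma S_eqv x y r : x = y -> S x r = S y r. Proof. by move->. Qed.


Variable t : 'I_n -> R.
Hypothesis htc : forall i r, t i * r = r * t i.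
Hypothesis htreg : forall i, regular (t i).
Hypothesis hcons1 : forall i j, i != j ->
     s j (t i) * s i (t j) = si j (t i) * si i (t j).
Hypothesis hcons2 : forall i j l, i != j -> j != l -> i != l ->
     s i (s j (t l)) * si i (si j (t l)) = s i (si j (t l)) * si i (s j (t l)).

Lemma CR_t i : CR (t i).
Proof.
split; first exact: htc.
by move=> x h; case: (htreg i) => hl _; apply: hl; rewrite h mulr0.
Qed.

Definition T (i : 'I_n) (h : 'rV[int]_n) := S (h + h) (s i (t i)).

Lemma CR_T i h : CR (T i h).
Proof. exact/CR_S/CR_s/CR_t. Qed.

Lemma hc1 i j h : i != j ->
  T i (h + unitvec j) * T j (h + unitvec i) = T i h * T j h.
Proof.
move=> ne; have := congr1 (S (h + h + unitvec i + unitvec j)) (hcons1 i j ne).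
rewrite !SM !Ss !Ssi /T !Ss; apply: eq4; apply: S_eqv; vec.
Qed.

Lemma hc2 l i j h : i != j -> j != l -> i != l ->
  T l (h + unitvec i + unitvec j) * T l h = T l (h + unitvec i) * T l (h + unitvec j).
Proof.
move=> nij njl nil; have := congr1 (S (h + h + unitvec i + unitvec j + unitvec l)) (hcons2 i j l nij njl nil).
rewrite !SM !Ss !Ssi /T !Ss; apply: eq4; apply: S_eqv; vec.
Qed.

Definition rho (i : 'I_n) (h : 'rV[int]_n) : 'rV[int]_n :=
  \row_a (if (a <= i)%N then h 0 a else 0).

Lemma rho_lt (i j : 'I_n) (h : 'rV[int]_n) : (i < j)%N -> rho i (h + unitvec j) = rho i h.
Proof.
move=> lt; apply/rowP => a; rewrite !mxE; case: ifP => // ai.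
have -> : (a == j) = false by apply/negbTE; apply: contraTneq ai => ->; rewrite -ltnNge.
by rewrite andbF /= addr0.
Qed.
Lemma rho_le (i j : 'I_n) (h : 'rV[int]_n) : (j <= i)%N -> rho i (h + unitvec j) = rho i h + unitvec j.
Proof.
move=> le; apply/rowP => a; rewrite !mxE; case: ifP => // ai.
have -> : (a == j) = false by apply/negbTE; apply: contraFneq ai => ->.
by rewrite andbF /= addr0.
Qed.

Section Inv.
Variables (l d : 'I_n) (x : 'rV[int]_n).
Definition Qi y := T l (x + unitvec d) * T l y = T l x * T l (y + unitvec d).

Lemma inv_step k y : d != l -> k != l -> k != d -> Qi y <-> Qi (y + unitvec k).
Proof.
move=> ndl nkl nkd; rewrite /Qi.
have ndk : d != k by rewrite eq_sym.
have H := hc2 l d k y ndk nkl ndl.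
have E : y + unitvec k + unitvec d = y + unitvec d + unitvec k by vec.
rewrite E; split => Q.
  by apply: (aux1 _ _ _ _ _ _ (CR_T _ _) (CR_T _ _) (CR_T _ _) (CR_T _ _) (CR_T _ _) (CR_T _ _) Q H).
by apply: (aux2 _ _ _ _ _ _ (CR_T _ _) (CR_T _ _) (CR_T _ _) (CR_T _ _) (CR_T _ _) (CR_T _ _) Q H).
Qed.

Lemma inv_z k y (z : int) : d != l -> k != l -> k != d -> Qi y -> Qi (y + z *: unitvec k).
Proof.
move=> h1 h2 h3; case: z => m.
  elim: m => [|m IH] Q; first by rewrite scale0r addr0.
  have -> : y + (Posz m.+1) *: unitvec k = (y + (Posz m) *: unitvec k) + unitvec k.
    apply/rowP => a; rewrite !mxE; lia.
  by apply: (proj1 (inv_step k _ h1 h2 h3)); apply: IH.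
elim: m => [|m IH] Q.
  apply: (proj2 (inv_step k _ h1 h2 h3)).
  have -> : y + Negz 0 *: unitvec k + unitvec k = y by apply/rowP => a; rewrite !mxE; lia.
  done.
apply: (proj2 (inv_step k _ h1 h2 h3)).
have -> : y + Negz m.+1 *: unitvec k + unitvec k = y + Negz m *: unitvec k.
  by apply/rowP => a; rewrite !mxE; lia.
exact: IH.
Qed.

Lemma inv_list (ks : seq 'I_n) : d != l ->
  (forall a, a \in ks -> a != l /\ a != d) ->
  forall y : 'rV[int]_n, (forall a, a \notin ks -> y 0 a = x 0 a) -> Qi y.
Proof.
move=> ndl; elim: ks => [|k ks IH] hks y hy.
  have -> : y = x by apply/rowP => a; apply: hy.
  by rewrite /Qi (CRC _ _ (CR_T _ _)).
have [hkl hkd] := hks k (mem_head _ _).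
have Q : Qi (y + (x 0 k - y 0 k) *: unitvec k).
  apply: IH => [a ai|a ai]; first by apply: hks; rewrite in_cons ai orbT.
  rewrite !mxE; case: (a =P k) => [->|/eqP ak].
    by rewrite !eqxx /= mulr1; lia.
  rewrite /= mulr0 addr0; apply: hy; rewrite in_cons negb_or ak ai.
  done.
have -> : y = (y + (x 0 k - y 0 k) *: unitvec k) + (y 0 k - x 0 k) *: unitvec k.
  have E : (x 0 k - y 0 k) + (y 0 k - x 0 k) = 0 by lia.
  by rewrite -addrA -scalerDl E scale0r addr0.
by apply: inv_z.
Qed.

Lemma inv_rho : (d < l)%N -> Qi (rho l x).
Proof.
move=> dl; have ndl : d != l by rewrite neq_ltn dl.
apply: (inv_list (filter (fun a : 'I_n => (l < a)%N) (enum 'I_n)) ndl _ (rho l x)) => [a|a].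
  rewrite mem_filter => /andP [la _]; split.
    by rewrite neq_ltn la orbT.
  by rewrite neq_ltn (ltn_trans dl la) orbT.
rewrite mem_filter mem_enum andbT -leqNgt => al.
by rewrite mxE al.
Qed.
End Inv.


Lemma aux3 (A B C Dd E F : R) : CR A -> CR B -> CR C -> CR Dd -> CR E -> CR F ->
  A * B = C * Dd -> A * E = C * F -> F * B = Dd * E.
Proof.
move=> hA hB hC hD hE hF P Q; apply: (CR_inj A _ _ hA).
rewrite mulrA [A * F](CRC _ _ hA) -mulrA P mulrA [F * C](CRC _ _ hF) -Q.
by rewrite -!mulrA [E * Dd](CRC _ _ hE).
Qed.

Lemma key i j h : i != j ->
  T i (rho i (h + unitvec j)) * T j (h + unitvec i) * T j (rho j h) =
  T j h * T i (rho i h) * T j (rho j (h + unitvec i)).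
Proof.
move=> nij; case: (ltngtP i j) => [lt|lt|e]; last by move: nij; rewrite (val_inj e) eqxx.
  rewrite (rho_lt i j h lt) (rho_le j i h (ltnW lt)).
  have Q := inv_rho j i h lt; rewrite /Qi in Q.
  by rewrite -mulrA Q mulrA [T i _ * T j h](CRC _ _ (CR_T _ _)).
rewrite (rho_le i j h (ltnW lt)) (rho_lt j i h lt); congr (_ * _).
have Q := inv_rho i j h lt; rewrite /Qi in Q.
have P := hc1 i j h nij.
exact: (aux3 _ _ _ _ _ _ (CR_T _ _) (CR_T _ _) (CR_T _ _) (CR_T _ _) (CR_T _ _) (CR_T _ _) P Q).
Qed.

Definition atm (p : 'I_n * 'rV[int]_n) : R := T p.1 p.2.
Lemma hatm p : CR (atm p). Proof. exact: CR_T. Qed.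
Local Notation LL := (L R _ atm hatm).
Local Notation actm := (act R _ atm hatm).
Local Notation dvm := (dv R _ atm hatm).

Definition FM := 'rV[int]_n -> LL.
Definition fzero : FM := fun _ => 0.
Definition fadd (f g : FM) : FM := fun x => f x + g x.
Definition fopp (f : FM) : FM := fun x => - f x.
Lemma faddA : associative fadd.
Proof. by move=> f g h; apply: funext => x; rewrite /fadd addrA. Qed.
Lemma faddC : commutative fadd.
Proof. by move=> f g; apply: funext => x; rewrite /fadd addrC. Qed.
Lemma fadd0 : left_id fzero fadd.
Proof. by move=> f; apply: funext => x; rewrite /fadd /fzero add0r. Qed.
Lemma faddN : left_inverse fzero fopp fadd.
Proof. by move=> f; apply: funext => x; rewrite /fadd /fzero /fopp addNr. Qed.
HB.instance Definition _ := gen_eqMixin FM.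
HB.instance Definition _ := gen_choiceMixin FM.
HB.instance Definition _ := GRing.isZmodule.Build FM faddA faddC fadd0 faddN.

Definition PT : zpred FM := @ZPred FM (fun _ => True) I (fun _ _ _ _ => I).
Local Notation B := (endo FM PT).

Definition mkB (F : FM -> FM) (h : forall f f' x, F (f - f') x = F f x - F f' x) : B.
Proof.
refine (@Endo FM PT F _ _) => // f f'; apply: funext => x; exact: h.
Defined.

Definition phif (r : R) : FM -> FM := fun f g => actm (S (g + g) r) (f g).
Lemma phif_add r f f' x : phif r (f - f') x = phif r f x - phif r f' x.
Proof. exact: act_sub. Qed.
Definition phi (r : R) : B := mkB (phif r) (phif_add r).

Definition Ypf (i : 'I_n) : FM -> FM := fun f g => actm (T i (rho i g)) (f (g + unitvec i)).
Lemma Ypf_add i f f' x : Ypf i (f - f') x = Ypf i f x - Ypf i f' x.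
Proof. exact: act_sub. Qed.
Definition Yp (i : 'I_n) : B := mkB (Ypf i) (Ypf_add i).

Definition Ymf (i : 'I_n) : FM -> FM := fun f g =>
  actm (T i (g - unitvec i)) (dvm (i, rho i (g - unitvec i)) (f (g - unitvec i))).
Lemma Ymf_add i f f' x : Ymf i (f - f') x = Ymf i f x - Ymf i f' x.
Proof. by rewrite /Ymf -act_sub -dv_sub. Qed.
Definition Ym (i : 'I_n) : B := mkB (Ymf i) (Ymf_add i).

Lemma Bext (F G : B) : (forall f g, F f g = G f g) -> F = G.
Proof. by move=> h; apply: endo_ext => f; apply: funext => g; apply: h. Qed.

Lemma phiB : zmod_morphism phi.
Proof.
move=> a b; apply: Bext => f g.
by rewrite /= /phif /fadd /fopp SB act_subl.
Qed.
Lemma phiM : monoid_morphism phi.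
Proof.
split.
  by apply: Bext => f g; rewrite /= /phif S1 act1.
move=> a b; apply: Bext => f g.
by rewrite /= /phif SM act_mul.
Qed.
HB.instance Definition _ := GRing.isZmodMorphism.Build R B phi phiB.
HB.instance Definition _ := GRing.isMonoidMorphism.Build R B phi phiM.

Lemma model_rel : tgwc_relations (fun i => s i) (fun i => si i) t phi Yp Ym.
Proof.
split; [|split; [|split; [|split; [|split]]]].
- move=> i r; apply: Bext => f g /=; rewrite /phif /Ypf !act_mul.
  rewrite (CRC _ _ (CR_T _ _)) !Ss; congr (actm (_ * _) _).
  by apply: S_eqv; vec.
- move=> i r; apply: Bext => f g /=; rewrite /phif /Ymf dv_act !act_mul.
  rewrite (CRC _ _ (CR_T _ _)) !Ssi; congr (actm (_ * _) _).
  by apply: S_eqv; vec.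
- move=> i; apply: Bext => f g /=; rewrite /phif /Ypf /Ymf act_mul addrK.
  apply: frac2; [exact: CR_mul (CR_T _ _) (CR_T _ _) | exact: CR_T | ].
  by rewrite /atm /= (CRC _ _ (CR_T _ _)).
- move=> i; apply: Bext => f g /=; rewrite /phif /Ypf /Ymf subrK.
  apply: frac3; [exact: CR_T | exact/CR_S/CR_si/CR_t | exact: CR_T | ].
  rewrite /atm /=; congr (_ * _); rewrite /T Ssi Ss; apply: S_eqv; vec.
- move=> i j nij; apply: Bext => f g /=; rewrite /Ypf /Ymf act_mul.
  have -> : g - unitvec j + unitvec i = g + unitvec i - unitvec j by vec.
  apply: frac4; [exact: CR_mul (CR_T _ _) (CR_T _ _) | exact: CR_T | exact: CR_T | ].
  rewrite /atm /=.
  have K := key i j (g - unitvec j) nij.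
  rewrite subrK (_ : g - unitvec j + unitvec i = g + unitvec i - unitvec j) in K; last by vec.
  exact: K.
- move=> i j nij; apply: Bext => f g /=.
  have nji : j != i by rewrite eq_sym.
  have K := key j i (g - unitvec i) nji.
  rewrite /Ypf /Ymf act_mul.
  have -> : g - unitvec i + unitvec j = g + unitvec j - unitvec i by vec.
  symmetry; apply: frac4; [exact: CR_mul (CR_T _ _) (CR_T _ _) | exact: CR_T | exact: CR_T | ].
  rewrite /atm /=.
  rewrite subrK (_ : g - unitvec i + unitvec j = g + unitvec j - unitvec i) in K; last by vec.
  exact: K.
Qed.

Lemma iota_inj (A : pzRingType) (iota : {rmorphism R -> A}) (Xp Xm : 'I_n -> A) :
  tgwc_universal (fun i => s i) (fun i => si i) t iota Xp Xm -> injective iota.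
Proof.
move=> [_ U]; have [psi [h1 _ _ _]] := U B phi Yp Ym model_rel.
have Z r : iota r = 0 -> r = 0.
  move=> e; have : phi r = 0 by rewrite -h1 e rmorph0.
  move/(congr1 (fun F : B => F (fun _ => Lpi R _ atm hatm 1 [::]) 0)).
  rewrite /= /phif addr0 S0 => E; apply: (act_faithful R _ atm hatm); exact: E.
move=> x y e; apply/eqP; rewrite -subr_eq0; apply/eqP/Z.
by rewrite rmorphB e subrr.
Qed.

End Main.


Lemma regroup (T K : eqType) (V : zmodType) (ps : seq T) (key : T -> K) (h : T -> V)
  (G : seq K) : uniq G -> (forall p, p \in ps -> key p \in G) ->
  \sum_(p <- ps) h p = \sum_(g <- G) \sum_(p <- ps | key p == g) h p.
Proof.
move=> uG hG.
transitivity (\sum_(p <- ps) \sum_(g <- G) (if key p == g then h p else 0)).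
  apply: eq_big_seq => p hp; rewrite (bigD1_seq (key p) (hG p hp) uG) /= eqxx.
  rewrite big1 ?addr0 // => g; rewrite eq_sym => /negbTE ->; by [].
rewrite exchange_big; apply: eq_bigr => g _; by rewrite [RHS]big_mkcond.
Qed.

Lemma sum_pick (K : eqType) (V : zmodType) (G : seq K) (g0 : K) (a : V) :
  uniq G -> g0 \in G -> \sum_(g <- G) (if g == g0 then a else 0) = a.
Proof.
move=> uG hg; rewrite (bigD1_seq g0 hg uG) /= eqxx.
by rewrite big1 ?addr0 // => g /negbTE ->.
Qed.

Section Apart.
Variables (R : pzRingType) (n : nat) (s si : 'I_n -> {rmorphism R -> R}).
Hypotheses (hs1 : forall i, cancel (s i) (si i)) (hs2 : forall i, cancel (si i) (s i)).
Variable t : 'I_n -> R.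
Hypothesis htc : forall i r, t i * r = r * t i.
Hypothesis htreg : forall i, regular (t i).
Variables (A : pzRingType) (iota : {rmorphism R -> A}) (Xp Xm : 'I_n -> A).
Hypothesis hA : tgwc_universal (fun i => s i) (fun i => si i) t iota Xp Xm.

Lemma CRs i c : CR c -> CR (s i c). Proof. exact: CR_s hs1 hs2 i c. Qed.
Lemma CRsi i c : CR c -> CR (si i c). Proof. exact: CR_si hs1 hs2 i c. Qed.
Lemma CRt i : CR (t i). Proof. exact: CR_t htc htreg i. Qed.

Lemma rXpR i r : Xp i * iota r = iota (s i (s i r)) * Xp i. Proof. by case: hA => [[h _] _]. Qed.
Lemma rXmR i r : Xm i * iota r = iota (si i (si i r)) * Xm i. Proof. by case: hA => [[_ [h _]] _]. Qed.
Lemma rpm i : Xp i * Xm i = iota (s i (t i)). Proof. by case: hA => [[_ [_ [h _]]] _]. Qed.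
Lemma rmp i : Xm i * Xp i = iota (si i (t i)). Proof. by case: hA => [[_ [_ [_ [h _]]]] _]. Qed.
Lemma rpm' i j : i != j -> Xp i * Xm j = Xm j * Xp i. Proof. by case: hA => [[_ [_ [_ [_ [h _]]]]] _]; apply: h. Qed.
Lemma rmp' i j : i != j -> Xm i * Xp j = Xp j * Xm i. Proof. by case: hA => [[_ [_ [_ [_ [_ h]]]]] _]; apply: h. Qed.

Definition word := seq (bool * 'I_n).
Definition letter (l : bool * 'I_n) : A := if l.1 then Xp l.2 else Xm l.2.
Definition ev (w : word) : A := foldr (fun l a => letter l * a) 1 w.
Lemma ev_nil : ev [::] = 1. Proof. by []. Qed.
Lemma ev_cons l w : ev (l :: w) = letter l * ev w. Proof. by []. Qed.
Lemma ev_cat w1 w2 : ev (w1 ++ w2) = ev w1 * ev w2.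
Proof. by elim: w1 => [|l w IH] /=; rewrite ?mul1r // IH mulrA. Qed.

Definition ltw (l : bool * 'I_n) (r : R) : R := if l.1 then s l.2 (s l.2 r) else si l.2 (si l.2 r).
Definition tw (w : word) (r : R) : R := foldr ltw r w.

Lemma letter_iota l r : letter l * iota r = iota (ltw l r) * letter l.
Proof. by case: l => [[] i]; rewrite /letter /ltw /= ?rXpR ?rXmR. Qed.
Lemma ev_iota w r : ev w * iota r = iota (tw w r) * ev w.
Proof.
elim: w => [|l w IH] /=; first by rewrite mul1r mulr1.
by rewrite -mulrA IH mulrA letter_iota mulrA.
Qed.
Lemma CR_ltw l c : CR c -> CR (ltw l c).
Proof. by case: l => [[] i] h; rewrite /ltw /=; [apply/CRs/CRs | apply/CRsi/CRsi]. Qed.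
Lemma CR_tw w c : CR c -> CR (tw w c).
Proof. by elim: w => //= l w IH h; apply/CR_ltw/IH. Qed.

Definition flip (l : bool * 'I_n) := (~~ l.1, l.2).
Definition cl (l : bool * 'I_n) : R := if l.1 then si l.2 (t l.2) else s l.2 (t l.2).
Lemma flip_mul l : letter (flip l) * letter l = iota (cl l).
Proof. by case: l => [[] i]; rewrite /letter /cl /= ?rmp ?rpm. Qed.
Lemma CR_cl l : CR (cl l).
Proof. by case: l => [[] i]; rewrite /cl /=; [apply/CRsi/CRt|apply/CRs/CRt]. Qed.
Lemma flipK l : flip (flip l) = l. Proof. by case: l => [[] i]. Qed.

Definition winv (w : word) : word := rev (map flip w).

Lemma WY w : exists c, CR c /\ ev (winv w) * ev w = iota c.
Proof.
elim: w => [|l w [c [hc IH]]]; first by exists 1; split; [apply: CR1 | rewrite /= mulr1 rmorph1].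
exists (tw (winv w) (cl l) * c); split; first exact/CR_mul/hc/CR_tw/CR_cl.
rewrite /winv map_cons rev_cons -cats1 ev_cat -/(winv w) ev_cons /= mulr1.
rewrite mulrA -[ev (winv w) * _ * _]mulrA flip_mul ev_iota -mulrA IH.
by rewrite rmorphM.
Qed.

Lemma YW w : exists c, CR c /\ ev w * ev (winv w) = iota c.
Proof.
elim: w => [|l w [c [hc IH]]]; first by exists 1; split; [apply: CR1 | rewrite /= mulr1 rmorph1].
exists (ltw l c * cl (flip l)); split; first exact/CR_mul/CR_cl/CR_ltw.
rewrite /winv map_cons rev_cons -cats1 ev_cat -/(winv w) ev_cons /= mulr1.
rewrite mulrA -[letter l * ev w * _]mulrA IH letter_iota -mulrA.
have := flip_mul (flip l); rewrite flipK => ->.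
by rewrite rmorphM.
Qed.


Definition Spred (a : A) := exists ps : seq (R * word), a = \sum_(p <- ps) iota p.1 * ev p.2.
Lemma Spred0 : Spred 0. Proof. by exists [::]; rewrite big_nil. Qed.
Lemma SpredB x y : Spred x -> Spred y -> Spred (x - y).
Proof.
move=> [p1 ->] [p2 ->]; exists (p1 ++ map (fun p => (- p.1, p.2)) p2).
rewrite big_cat big_map /= -sumrN; congr (_ + _); apply: eq_bigr => p _.
by rewrite rmorphN mulNr.
Qed.
Lemma Spred1 : Spred 1.
Proof. by exists [:: (1, [::])]; rewrite big_cons big_nil addr0 /= rmorph1 mulr1. Qed.

Definition SP : zpred A := @ZPred A Spred Spred0 SpredB.
Definition TP : zpred A := @ZPred A (fun _ => True) I (fun _ _ _ _ => I).
Local Notation BA := (endo A SP).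
Local Notation EA := (endo A TP).

Lemma Sl_iota r a : Spred a -> Spred (iota r * a).
Proof.
move=> [ps ->]; exists (map (fun p => (r * p.1, p.2)) ps).
rewrite big_map mulr_sumr; apply: eq_bigr => p _ /=.
by rewrite rmorphM mulrA.
Qed.
Lemma Sl_letter l a : Spred a -> Spred (letter l * a).
Proof.
move=> [ps ->]; exists (map (fun p => (ltw l p.1, l :: p.2)) ps).
rewrite big_map mulr_sumr; apply: eq_bigr => p _ /=.
by rewrite mulrA letter_iota -mulrA.
Qed.

Definition mkBA (F : A -> A) (hF : forall x y, F (x - y) = F x - F y)
  (hP : forall x, Spred x -> Spred (F x)) : BA := @Endo A SP F hF hP.
Definition mkEA (F : A -> A) (hF : forall x y, F (x - y) = F x - F y) : EA :=
  @Endo A TP F hF (fun _ _ => I).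

Lemma lmulB (c : A) x y : c * (x - y) = c * x - c * y. Proof. exact: mulrBr. Qed.

Definition phiS (r : R) : BA := mkBA (fun x => iota r * x) (lmulB (iota r)) (Sl_iota r).
Definition YpS (i : 'I_n) : BA := mkBA (fun x => Xp i * x) (lmulB (Xp i)) (Sl_letter (true, i)).
Definition YmS (i : 'I_n) : BA := mkBA (fun x => Xm i * x) (lmulB (Xm i)) (Sl_letter (false, i)).
Definition phiE (r : R) : EA := mkEA (fun x => iota r * x) (lmulB (iota r)).
Definition YpE (i : 'I_n) : EA := mkEA (fun x => Xp i * x) (lmulB (Xp i)).
Definition YmE (i : 'I_n) : EA := mkEA (fun x => Xm i * x) (lmulB (Xm i)).
Definition Lmul (a : A) : EA := mkEA (fun x => a * x) (lmulB a).

Lemma BAext (F G : BA) : (forall x, F x = G x) -> F = G.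
Proof. exact: endo_ext. Qed.
Lemma EAext (F G : EA) : (forall x, F x = G x) -> F = G.
Proof. exact: endo_ext. Qed.

Lemma phiS_zm : zmod_morphism phiS.
Proof. by move=> a b; apply: BAext => x /=; rewrite rmorphB mulrBl. Qed.
Lemma phiS_mm : monoid_morphism phiS.
Proof.
split; first by apply: BAext => x /=; rewrite rmorph1 mul1r.
by move=> a b; apply: BAext => x /=; rewrite rmorphM mulrA.
Qed.
HB.instance Definition _ := GRing.isZmodMorphism.Build R BA phiS phiS_zm.
HB.instance Definition _ := GRing.isMonoidMorphism.Build R BA phiS phiS_mm.

Lemma phiE_zm : zmod_morphism phiE.
Proof. by move=> a b; apply: EAext => x /=; rewrite rmorphB mulrBl. Qed.
Lemma phiE_mm : monoid_morphism phiE.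
Proof.
split; first by apply: EAext => x /=; rewrite rmorph1 mul1r.
by move=> a b; apply: EAext => x /=; rewrite rmorphM mulrA.
Qed.
HB.instance Definition _ := GRing.isZmodMorphism.Build R EA phiE phiE_zm.
HB.instance Definition _ := GRing.isMonoidMorphism.Build R EA phiE phiE_mm.

Lemma Lmul_zm : zmod_morphism Lmul.
Proof. by move=> a b; apply: EAext => x /=; rewrite mulrBl. Qed.
Lemma Lmul_mm : monoid_morphism Lmul.
Proof.
split; first by apply: EAext => x /=; rewrite mul1r.
by move=> a b; apply: EAext => x /=; rewrite mulrA.
Qed.
HB.instance Definition _ := GRing.isZmodMorphism.Build A EA Lmul Lmul_zm.
HB.instance Definition _ := GRing.isMonoidMorphism.Build A EA Lmul Lmul_mm.

Definition incl (F : BA) : EA := mkEA F (@ef_add A SP F).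
Definition inclpsi (psi : {rmorphism A -> BA}) (a : A) : EA := incl (psi a).
Lemma inclpsi_zm (psi : {rmorphism A -> BA}) : zmod_morphism (inclpsi psi).
Proof. by move=> a b; apply: EAext => x /=; rewrite rmorphB. Qed.
Lemma inclpsi_mm (psi : {rmorphism A -> BA}) : monoid_morphism (inclpsi psi).
Proof.
split; first by apply: EAext => x /=; rewrite rmorph1.
by move=> a b; apply: EAext => x /=; rewrite rmorphM.
Qed.
HB.instance Definition _ (psi : {rmorphism A -> BA}) :=
  GRing.isZmodMorphism.Build A EA (inclpsi psi) (inclpsi_zm psi).
HB.instance Definition _ (psi : {rmorphism A -> BA}) :=
  GRing.isMonoidMorphism.Build A EA (inclpsi psi) (inclpsi_mm psi).

Lemma relS : tgwc_relations (fun i => s i) (fun i => si i) t phiS YpS YmS.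
Proof.
split; [|split; [|split; [|split; [|split]]]].
- by move=> i r; apply: BAext => x /=; rewrite !mulrA rXpR.
- by move=> i r; apply: BAext => x /=; rewrite !mulrA rXmR.
- by move=> i; apply: BAext => x /=; rewrite mulrA rpm.
- by move=> i; apply: BAext => x /=; rewrite mulrA rmp.
- by move=> i j nij; apply: BAext => x /=; rewrite !mulrA rpm'.
- by move=> i j nij; apply: BAext => x /=; rewrite !mulrA rmp'.
Qed.
Lemma relE : tgwc_relations (fun i => s i) (fun i => si i) t phiE YpE YmE.
Proof.
split; [|split; [|split; [|split; [|split]]]].
- by move=> i r; apply: EAext => x /=; rewrite !mulrA rXpR.
- by move=> i r; apply: EAext => x /=; rewrite !mulrA rXmR.
- by move=> i; apply: EAext => x /=; rewrite mulrA rpm.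
- by move=> i; apply: EAext => x /=; rewrite mulrA rmp.
- by move=> i j nij; apply: EAext => x /=; rewrite !mulrA rpm'.
- by move=> i j nij; apply: EAext => x /=; rewrite !mulrA rmp'.
Qed.

Lemma generation a : Spred a.
Proof.
have [_ U] := hA.
have [psi [h1 h2 h3 _]] := U _ phiS YpS YmS relS.
have [psi2 [_ _ _ uniq2]] := U _ phiE YpE YmE relE.
have E1 := uniq2 Lmul (fun r => erefl) (fun i => erefl) (fun i => erefl) a.
have E2 := uniq2 (inclpsi psi) _ _ _ a.
rewrite -E2 in E1; last first.
- by move=> i; apply: EAext => x; rewrite /inclpsi /= h3.
- by move=> i; apply: EAext => x; rewrite /inclpsi /= h2.
- by move=> r; apply: EAext => x; rewrite /inclpsi /= h1.
have := congr1 (fun F : EA => F 1) E1; rewrite /= mulr1 => ->.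
exact: (@ef_P A SP (psi a) 1 Spred1).
Qed.


Definition ldeg (l : bool * 'I_n) : 'rV[int]_n := if l.1 then unitvec l.2 else - unitvec l.2.
Definition deg (w : word) : 'rV[int]_n := foldr (fun l v => ldeg l + v) 0 w.
Lemma deg_cons l w : deg (l :: w) = ldeg l + deg w. Proof. by []. Qed.
Lemma deg_cat w1 w2 : deg (w1 ++ w2) = deg w1 + deg w2.
Proof. by elim: w1 => [|l w IH] /=; rewrite ?add0r // IH addrA. Qed.

Lemma ldeg_entry l i : ldeg l 0 i = (l == (true, i))%:Z - (l == (false, i))%:Z.
Proof.
case: l => b j; rewrite /ldeg /= !xpair_eqE; case: b; case: (j =P i) => [->|/eqP nji] /=.
- by rewrite ?eqxx uv_eq.
- by rewrite ?(negbTE nji) uv_ne // eq_sym.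
- by rewrite ?eqxx mxE uv_eq.
- by rewrite ?(negbTE nji) mxE uv_ne ?oppr0 // eq_sym.
Qed.

Lemma deg_entry w i :
  deg w 0 i = (count_mem (true, i) w)%:Z - (count_mem (false, i) w)%:Z.
Proof.
elim: w => [|l w IH] /=; first by rewrite mxE.
by rewrite mxE IH ldeg_entry !PoszD opprD addrACA.
Qed.

Definition isP (w : word) := all (fun l => l.1) w.
Definition isM (w : word) := all (fun l => ~~ l.1) w.

Lemma isP_cnt P i : isP P -> count_mem (false, i) P = 0%N.
Proof.
move=> hP; apply/count_memPn; apply/negP => /(allP hP) /=; by [].
Qed.
Lemma isM_cnt N i : isM N -> count_mem (true, i) N = 0%N.
Proof.
move=> hN; apply/count_memPn; apply/negP => /(allP hN) /=; by [].
Qed.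

Lemma move_m i P : isP P -> exists r P' N', [/\ isP P', isM N',
  deg P' + deg N' = deg P - unitvec i & Xm i * ev P = iota r * ev P' * ev N'].
Proof.
elim: P => [|[b j] P IH] hP.
  exists 1, [::], [:: (false, i)]; split => //.
    by rewrite deg_cons /ldeg /=; vec.
  by rewrite /= rmorph1 !mul1r mulr1.
move/andP: hP => [hb hP]; case: b hb => // _.
case: (j =P i) => [->|/eqP nji].
  exists (si i (t i)), P, [::]; split => //.
    by rewrite deg_cons /ldeg /=; vec.
  by rewrite /= mulr1 mulrA rmp.
have [r [P' [N' [h1 h2 h3 h4]]]] := IH hP.
exists (s j (s j r)), ((true, j) :: P'), N'; split => //.
  by rewrite !deg_cons /ldeg /= -addrA h3; vec.
have nij : i != j by rewrite eq_sym.
by rewrite /= mulrA (rmp' i j nij) -mulrA h4 !mulrA rXpR.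
Qed.

Lemma normal w : exists r P N, [/\ isP P, isM N, deg P + deg N = deg w &
  ev w = iota r * ev P * ev N].
Proof.
elim: w => [|[b i] w [r [P [N [h1 h2 h3 h4]]]]].
  by exists 1, [::], [::]; split => //=; rewrite ?addr0 // rmorph1 !mulr1.
case: b.
  exists (s i (s i r)), ((true, i) :: P), N; split => //.
    by rewrite !deg_cons -addrA h3.
  by rewrite /= h4 !mulrA rXpR.
have [r2 [P2 [N2 [g1 g2 g3 g4]]]] := move_m i P h1.
exists (si i (si i r) * r2), P2, (N2 ++ N); split => //.
- by move: g2 h2; rewrite /isM all_cat => -> ->.
- by rewrite deg_cat addrA g3 deg_cons -h3 /ldeg /=; vec.
rewrite /= h4 ev_cat !mulrA rXmR -[_ * Xm i * ev P]mulrA g4.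
by rewrite rmorphM !mulrA.
Qed.

Lemma move_p i N : isM N -> (false, i) \in N -> exists r N', [/\ isM N',
  deg N' = deg N + unitvec i & Xp i * ev N = iota r * ev N'].
Proof.
elim: N => [|[b j] N IH] // /andP [hb hN]; case: b hb => // _.
rewrite in_cons; case: (j =P i) => [->|/eqP nji] hin.
  exists (s i (t i)), N; split => //.
    by rewrite deg_cons /ldeg /=; vec.
  by rewrite /= mulrA rpm.
have hin' : (false, i) \in N.
  move: hin => /orP [|//]; rewrite xpair_eqE /= => /eqP ji; by rewrite ji eqxx in nji.
have [r [N' [h1 h2 h3]]] := IH hN hin'.
exists (si j (si j r)), ((false, j) :: N'); split => //.
  by rewrite !deg_cons h2 /ldeg /=; vec.
have nij : i != j by rewrite eq_sym.
by rewrite /= mulrA (rpm' i j nij) -mulrA h3 mulrA rXmR -mulrA.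
Qed.

Lemma isM_deg0 N : isM N -> deg N = 0 -> N = [::].
Proof.
case: N => [//|[b j] N] /andP [hb hN]; case: b hb => // _ e; exfalso.
have := deg_entry ((false, j) :: N) j; rewrite e mxE => /eqP; rewrite eq_sym subr_eq0 => /eqP [].
have := isM_cnt N j hN; rewrite /= eqxx /=; lia.
Qed.

Lemma phase2 m P N : size P = m -> isP P -> isM N -> deg P + deg N = 0 ->
  exists r, ev P * ev N = iota r.
Proof.
elim: m P N => [|m IH] P N.
  move/eqP; rewrite size_eq0 => /eqP -> _ hN; rewrite add0r => /(isM_deg0 N hN) ->.
  by exists 1; rewrite rmorph1 mulr1.
case/lastP: P => [//|P0 [b i]]; rewrite size_rcons => -[sz].
rewrite /isP all_rcons /= => /andP [hb hP]; case: b hb => // _ hN e.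
have hin : (false, i) \in N.
  have E := deg_entry (rcons P0 (true, i) ++ N) i.
  rewrite deg_cat e mxE in E; move/eqP: E; rewrite eq_sym subr_eq0 => /eqP [] E.
  rewrite -cats1 !count_cat /= !xpair_eqE /= eqxx /= in E.
  have c1 := isP_cnt P0 i hP; have c2 := isM_cnt N i hN.
  rewrite c1 c2 !addn0 !add0n in E.
  by rewrite -has_pred1 has_count -E addn1.
have [r [N' [h1 h2 h3]]] := move_p i N hN hin.
have [r2 e2] : exists r2, ev P0 * ev N' = iota r2.
  apply: (IH P0 N' sz hP h1).
  move: e; rewrite -cats1 deg_cat h2 /= /ldeg /= addr0.
  by move=> e; rewrite -e; vec.
exists (tw P0 r * r2).
by rewrite -cats1 ev_cat /= mulr1 -mulrA h3 mulrA ev_iota -mulrA e2 rmorphM.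
Qed.

Lemma deg0_iota w : deg w = 0 -> exists r, ev w = iota r.
Proof.
move=> e; have [r [P [N [h1 h2 h3 h4]]]] := normal w.
rewrite e in h3; have [r2 e2] := phase2 (size P) P N (erefl _) h1 h2 h3.
by exists (r * r2); rewrite h4 -mulrA e2 rmorphM.
Qed.


Variable D : 'rV[int]_n -> A -> Prop.
Hypothesis hD : is_grading D.
Hypothesis hDR : forall r, D 0 (iota r).
Hypothesis hDXp : forall i, D (unitvec i) (Xp i).
Hypothesis hDXm : forall i, D (- unitvec i) (Xm i).
Hypothesis hinj : injective iota.

Lemma Dz g : D g 0. Proof. by case: hD => h _ _ _; case: (h g). Qed.
Lemma DB {g x y} : D g x -> D g y -> D g (x - y). Proof. by case: hD => h _ _ _; case: (h g) => _; apply. Qed.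
Lemma DN {g x} : D g x -> D g (- x).
Proof. by move=> hx; rewrite -sub0r; apply: DB => //; apply: Dz. Qed.
Lemma DD {g x y} : D g x -> D g y -> D g (x + y).
Proof. by move=> hx hy; rewrite -[y]opprK; apply: DB => //; apply: DN. Qed.
Lemma DM {g h x y} : D g x -> D h y -> D (g + h) (x * y).
Proof. by case: hD => _ h' _ _; apply: h'. Qed.
Lemma Dsum (T : Type) (r : seq T) (P : pred T) (F : T -> A) g :
  (forall x, P x -> D g (F x)) -> D g (\sum_(x <- r | P x) F x).
Proof. by move=> h; apply: big_ind => //; [apply: Dz | move=> ? ?; apply: DD]. Qed.
Lemma DM0l {g x y} : D 0 x -> D g y -> D g (x * y).
Proof. by move=> hx hy; have := DM hx hy; rewrite add0r. Qed.
Lemma DM0r {g x y} : D g x -> D 0 y -> D g (x * y).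
Proof. by move=> hx hy; have := DM hx hy; rewrite addr0. Qed.

Lemma letter_D l : D (ldeg l) (letter l).
Proof. by case: l => [[] i]; rewrite /ldeg /letter /=. Qed.
Lemma ev_D w : D (deg w) (ev w).
Proof.
elim: w => [|l w IH] /=; first by rewrite -(rmorph1 iota).
exact: DM (letter_D l) IH.
Qed.

Lemma D0_iota {a} : D 0 a -> exists r, a = iota r.
Proof.
have [ps ->] := generation a => Da.
pose key := fun p : R * word => deg p.2.
pose h := fun p : R * word => iota p.1 * ev p.2.
pose G := undup (0 :: map key ps).
have uG : uniq G by apply: undup_uniq.
have hG : forall p, p \in ps -> key p \in G.
  by move=> p hp; rewrite mem_undup in_cons map_f ?orbT.
have h0 : (0 : 'rV[int]_n) \in G by rewrite mem_undup mem_head.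
pose F g := \sum_(p <- ps | key p == g) h p.
have DF g : D g (F g).
  apply: Dsum => p /eqP <-; apply: DM0l; [exact: hDR | exact: ev_D].
have E : \sum_(p <- ps) iota p.1 * ev p.2 = \sum_(g <- G) F g by apply: regroup.
pose f g := F g - (if g == 0 then \sum_(p <- ps) iota p.1 * ev p.2 else 0).
have Df g : D g (f g).
  apply: DB => //; case: eqP => [->|_] //; exact: Dz.
have Z : \sum_(g <- G) f g = 0.
  by rewrite sumrB sum_pick // -E subrr.
case: hD => _ _ _ hU.
have := hU G f uG Df Z 0 h0; rewrite /f eqxx => /eqP; rewrite subr_eq0 => /eqP <-.
rewrite /F; apply: (big_ind (fun x => exists r, x = iota r)) => [|x y [r1 ->] [r2 ->]|p /eqP kp].
- by exists 0; rewrite rmorph0.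
- by exists (r1 + r2); rewrite rmorphD.
have [r hr] := deg0_iota p.2 kp.
by exists (p.1 * r); rewrite /h hr rmorphM.
Qed.

Lemma deg_surj1 i (z : int) : exists w, deg w = z *: unitvec i.
Proof.
case: z => m.
  elim: m => [|m [w hw]]; first by exists [::]; rewrite scale0r.
  exists ((true, i) :: w); rewrite deg_cons hw /ldeg /=.
  rewrite (_ : Posz m.+1 = Posz m + 1); last by rewrite -PoszD addn1.
  by rewrite scalerDl scale1r addrC.
elim: m => [|m [w hw]].
  by exists [:: (false, i)]; rewrite deg_cons /ldeg /= addr0 NegzE scaleNr scale1r.
exists ((false, i) :: w); rewrite deg_cons hw /ldeg /=.
rewrite (_ : Negz m.+1 = Negz m - 1); last by rewrite !NegzE -opprD -PoszD addn1.
by rewrite scalerDl scaleNr scale1r addrC.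
Qed.

Lemma deg_surj v : exists w, deg w = v.
Proof.
have H (l : seq 'I_n) : exists w, deg w = \sum_(j <- l) v 0 j *: unitvec j.
  elim: l => [|j l [w hw]]; first by exists [::]; rewrite big_nil.
  have [w1 h1] := deg_surj1 j (v 0 j).
  by exists (w1 ++ w); rewrite deg_cat big_cons h1 hw.
have [w hw] := H (index_enum 'I_n); exists w; rewrite hw [RHS]row_sum_delta.
by [].
Qed.

Definition J (a : A) := exists c, CR c /\ iota c * a = 0.
Definition JR (a : A) := exists c, CR c /\ a * iota c = 0.

Lemma homL {g b} : D g b -> (forall w y, deg w = - g -> ev w * b = iota y -> y = 0) -> J b.
Proof.
move=> Db H; have [w hw] := deg_surj (- g).
have D0 : D 0 (ev w * b) by have := DM (ev_D w) Db; rewrite hw addNr.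
have [y hy] := D0_iota D0; have y0 := H w y hw hy.
have [c [hc hWY]] := WY w; exists c; split => //.
by rewrite -hWY -mulrA hy y0 rmorph0 mulr0.
Qed.

Lemma homR {g b} : D g b -> (forall w z, deg w = - g -> b * ev w = iota z -> z = 0) -> JR b.
Proof.
move=> Db H; have [w hw] := deg_surj (- g).
have D0 : D 0 (b * ev w) by have := DM Db (ev_D w); rewrite hw addrN.
have [z hz] := D0_iota D0; have z0 := H w z hw hz.
have [c [hc hYW]] := YW w; exists c; split => //.
by rewrite -hYW mulrA hz z0 rmorph0 mul0r.
Qed.

Lemma iota_eq0 {x} : iota x = 0 -> x = 0.
Proof. by move=> e; apply: hinj; rewrite e rmorph0. Qed.

Lemma JR_homJ {g b} : D g b -> JR b -> J b.
Proof.
move=> Db [c [hc e]]; apply: (homL Db) => w y _ hy.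
apply: (CR_rreg _ _ hc); apply: iota_eq0.
by rewrite rmorphM -hy -mulrA e mulr0.
Qed.
Lemma J_homJR {g b} : D g b -> J b -> JR b.
Proof.
move=> Db [c [hc e]]; apply: (homR Db) => w z _ hz.
case: hc => _ hc; apply: hc; apply: iota_eq0.
by rewrite rmorphM -hz mulrA e mul0r.
Qed.
Lemma TL_homJ {g b r} : D g b -> regular r -> iota r * b = 0 -> J b.
Proof.
move=> Db [hl _] e; apply: (JR_homJ Db); apply: (homR Db) => w z _ hz.
apply: hl; rewrite mulr0; apply: iota_eq0.
by rewrite rmorphM -hz mulrA e mul0r.
Qed.
Lemma TR_homJ {g b r} : D g b -> regular r -> b * iota r = 0 -> J b.
Proof.
move=> Db [_ hr] e; apply: (homL Db) => w y _ hy.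
apply: hr; rewrite /= mul0r; apply: iota_eq0.
by rewrite rmorphM -hy -mulrA e mulr0.
Qed.

Lemma J0 : J 0. Proof. by exists 1; split; [apply: CR1 | rewrite mulr0]. Qed.
Lemma JB {a b} : J a -> J b -> J (a - b).
Proof.
move=> [c1 [h1 e1]] [c2 [h2 e2]]; exists (c1 * c2); split; first exact: CR_mul.
rewrite mulrBr.
have -> : iota (c1 * c2) * a = iota c2 * (iota c1 * a) by rewrite (CRC _ _ h1) rmorphM mulrA.
have -> : iota (c1 * c2) * b = iota c1 * (iota c2 * b) by rewrite rmorphM mulrA.
by rewrite e1 e2 !mulr0 subrr.
Qed.
Lemma JD {a b} : J a -> J b -> J (a + b).
Proof.
move=> ha hb; have -> : a + b = a - (0 - b) by rewrite sub0r opprK.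
by apply: JB => //; apply: JB => //; apply: J0.
Qed.
Lemma J_sum (T : Type) (r : seq T) (P : pred T) F :
  (forall x, P x -> J (F x)) -> J (\sum_(x <- r | P x) F x).
Proof. by move=> h; apply: big_ind => //; [apply: J0 | move=> ? ?; apply: JD]. Qed.

Lemma JR0 : JR 0. Proof. by exists 1; split; [apply: CR1 | rewrite mul0r]. Qed.
Lemma JRD {a b} : JR a -> JR b -> JR (a + b).
Proof.
move=> [c1 [h1 e1]] [c2 [h2 e2]]; exists (c1 * c2); split; first exact: CR_mul.
rewrite mulrDl.
have -> : a * iota (c1 * c2) = a * iota c1 * iota c2 by rewrite rmorphM mulrA.
have -> : b * iota (c1 * c2) = b * iota c2 * iota c1 by rewrite (CRC _ _ h1) rmorphM mulrA.
by rewrite e1 e2 !mul0r addr0.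
Qed.
Lemma JR_sum (T : Type) (r : seq T) (P : pred T) F :
  (forall x, P x -> JR (F x)) -> JR (\sum_(x <- r | P x) F x).
Proof. by move=> h; apply: big_ind => //; [apply: JR0 | move=> ? ?; apply: JRD]. Qed.

Lemma comp_zero_l {x a} : D 0 x -> x * a = 0 -> exists gs f,
  [/\ uniq gs, forall g, D g (f g), a = \sum_(g <- gs) f g &
      forall g, g \in gs -> x * f g = 0].
Proof.
move=> Dx e; case: hD => _ _ hdec hU; have [gs [f [ug Df ea]]] := hdec a.
exists gs, f; split => // g hg; apply: (hU gs (fun g => x * f g)) => //.
  by move=> g'; apply: DM0l.
by rewrite -mulr_sumr -ea.
Qed.
Lemma comp_zero_r {x a} : D 0 x -> a * x = 0 -> exists gs f,
  [/\ uniq gs, forall g, D g (f g), a = \sum_(g <- gs) f g &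
      forall g, g \in gs -> f g * x = 0].
Proof.
move=> Dx e; case: hD => _ _ hdec hU; have [gs [f [ug Df ea]]] := hdec a.
exists gs, f; split => // g hg; apply: (hU gs (fun g => f g * x)) => //.
  by move=> g'; apply: DM0r.
by rewrite -mulr_suml -ea.
Qed.

Lemma TL_J {a r} : regular r -> iota r * a = 0 -> J a.
Proof.
move=> hr e; have [gs [f [_ Df -> hz]]] := comp_zero_l (hDR r) e.
rewrite big_seq; apply: J_sum => g hg; exact: TL_homJ (Df g) hr (hz g hg).
Qed.
Lemma TR_J {a r} : regular r -> a * iota r = 0 -> J a.
Proof.
move=> hr e; have [gs [f [_ Df -> hz]]] := comp_zero_r (hDR r) e.
rewrite big_seq; apply: J_sum => g hg; exact: TR_homJ (Df g) hr (hz g hg).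
Qed.
Lemma J_JR {a} : J a -> JR a.
Proof.
move=> [c [hc e]]; have [gs [f [_ Df -> hz]]] := comp_zero_l (hDR c) e.
rewrite big_seq; apply: JR_sum => g hg; apply: (J_homJR (Df g)).
by exists c; split => //; apply: hz.
Qed.

Lemma CR_regular {c : R} : CR c -> regular c.
Proof.
move=> hc; split => x y e; apply/eqP; rewrite -subr_eq0; apply/eqP.
  by case: hc => _ h; apply: h; rewrite mulrBr e subrr.
by apply: (CR_rreg _ _ hc); rewrite /= mulrBl e subrr.
Qed.

Lemma J_TL {a} : J a -> exists r, regular r /\ iota r * a = 0.
Proof. by move=> [c [hc e]]; exists c; split => //; apply: CR_regular. Qed.
Lemma JR_TR {a} : JR a -> exists r, regular r /\ a * iota r = 0.
Proof. by move=> [c [hc e]]; exists c; split => //; apply: CR_regular. Qed.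

Lemma J_left {x a} : J a -> J (x * a).
Proof.
move=> ha; have [ps ->] := generation x; rewrite mulr_suml; apply: J_sum => p _.
have Jw : forall w b, J b -> J (ev w * b).
  elim => [|l w IH] b hb /=; first by rewrite mul1r.
  have [c [hc e]] := IH b hb; exists (ltw l c); split; first exact: CR_ltw.
  by rewrite -mulrA mulrA -letter_iota -mulrA e mulr0.
have [c [hc e]] := Jw p.2 a ha; exists c; split => //.
rewrite -mulrA mulrA -rmorphM (CRC _ _ hc) rmorphM -mulrA e mulr0.
by [].
Qed.
Lemma J_right {x a} : J a -> J (a * x).
Proof. by move=> [c [hc e]]; exists c; split => //; rewrite mulrA e mul0r. Qed.

Lemma J_graded : is_graded_ideal D J.
Proof.
split.
  split; [exact: J0 | by move=> ? ?; apply: JB | by move=> a x hx; split; [apply: J_left | apply: J_right]].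
move=> a [c [hc e]]; have [gs [f [ug Df -> hz]]] := comp_zero_l (hDR c) e.
exists gs, (fun g => if g \in gs then f g else 0); split => //.
  move=> g; case: ifP => hg; split; [exact: Df | | exact: Dz | exact: J0].
  by exists c; split => //; apply: hz.
by rewrite [RHS]big_seq_cond [LHS]big_seq_cond; apply: eq_bigr => g /andP [-> _].
Qed.

Lemma J_meet r : J (iota r) -> iota r = 0.
Proof.
move=> [c [[_ hc] e]]; rewrite -rmorphM in e; have := iota_eq0 e => /hc ->.
by rewrite rmorph0.
Qed.

Lemma GI_J {I a} : is_graded_ideal D I -> (forall r, I (iota r) -> iota r = 0) -> I a -> J a.
Proof.
move=> [[_ _ hI] hgr] hR Ia; have [gs [f [ug hf ->]]] := hgr a Ia.
apply: J_sum => g _; have [Dg Ig] := hf g; apply: (homL Dg) => w y _ hy.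
apply: iota_eq0; apply: hR; rewrite -hy; exact: (hI _ _ Ig).1.
Qed.

Theorem main_apart :
  (forall a : A, in_sum_of_graded_ideals_meeting_R_trivially D iota a <->
                 exists r : R, regular r /\ iota r * a = 0) /\
  (forall a : A, (exists r : R, regular r /\ iota r * a = 0) <->
                 (exists r : R, regular r /\ a * iota r = 0)).
Proof.
split => a; split.
- move=> [m [Is [xs [hIs hR hx ->]]]]; apply: J_TL; apply: J_sum => j _.
  exact: (GI_J (hIs j) (hR j) (hx j)).
- move=> [r [hr e]]; exists 1%N, (fun _ => J), (fun _ => a); split => //.
  + by move=> _; apply: J_graded.
  + by move=> _ r'; apply: J_meet.
  + by move=> _; apply: TL_J hr e.
  + by rewrite big_ord1.
- by move=> [r [hr e]]; apply/JR_TR/J_JR/(TL_J hr e).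
- by move=> [r [hr e]]; apply/J_TL/(TR_J hr e).
Qed.

End Apart.


Theorem mainTheorem5
  (k : fieldType) (R : algType k) (n : nat)
  (s si : 'I_n -> {lrmorphism R -> R}) (t : 'I_n -> R)
  (hs1 : forall i, cancel (s i) (si i)) (hs2 : forall i, cancel (si i) (s i))
  (hcomm : forall i j r, s i (s j r) = s j (s i r))
  (htc : forall i r, t i * r = r * t i)
  (htreg : forall i, regular (t i))
  (hcons1 : forall i j, i != j ->
     s j (t i) * s i (t j) = si j (t i) * si i (t j))
  (hcons2 : forall i j l, i != j -> j != l -> i != l ->
     s i (s j (t l)) * si i (si j (t l)) = s i (si j (t l)) * si i (s j (t l)))
  (A : algType k) (iota : {lrmorphism R -> A}) (Xp Xm : 'I_n -> A)
  (hA : tgwc_universal (fun i => s i) (fun i => si i) t iota Xp Xm)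
  (D : 'rV[int]_n -> A -> Prop) (hD : is_grading D)
  (hDR : forall r, D 0 (iota r))
  (hDXp : forall i, D (unitvec i) (Xp i))
  (hDXm : forall i, D (- unitvec i) (Xm i)) :
  (forall a : A, in_sum_of_graded_ideals_meeting_R_trivially D iota a <->
                 exists r : R, regular r /\ iota r * a = 0) /\
  (forall a : A, (exists r : R, regular r /\ iota r * a = 0) <->
                 (exists r : R, regular r /\ a * iota r = 0)).
Proof.
pose s' := fun i => (s i : {rmorphism R -> R}).
pose si' := fun i => (si i : {rmorphism R -> R}).
pose iota' := (iota : {rmorphism R -> A}).
have hinj : injective iota'.
  exact: (@iota_inj R n s' si' hs1 hs2 hcomm t htc htreg hcons1 hcons2 A iota' Xp Xm hA).
exact: (@main_apart R n s' si' hs1 hs2 t htc htreg A iota' Xp Xm hA D hD hDR hDXp hDXm hinj).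
Qed.
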